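(* Let $M=\{D(c_i;r_i)\}_{i=1}^m$ be a $d$-disk system and let $\mu\ge 0$. Then $\mu=\mu_M$ if and only if the set $\bigcap_{i=1}^m D(c_i;\mu r_i)$ consists of exactly one point.
   Context: A $d$-disk system is a finite collection $M=\{D_1,\dots,D_m\}$ of closed Euclidean balls $D_i=D(c_i;r_i)=\{x\in\mathbb R^d:\|x-c_i\|\le r_i\}$ with $r_i>0$. For a scale $\lambda\ge0$, the rescaled system is $M_\lambda=\{D(c_i;\lambda r_i)\}_{i=1}^m$ (for $\lambda=0$, $D(c_i;0)=\{c_i\}$). The Čech scale of $M$ is $\mu_M=\inf\{\lambda\ge 0:\bigcap_{i=1}^m D(c_i;\lambda r_i)\neq\emptyset\}$. When the intersection $\bigcap_i D(c_i;\mu_M r_i)$ is a single point, that point is denoted $c_M$. *)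

(* Defs.v *)
(* classical reals. Points of R^d are lists of reals of length d. *)
From Stdlib Require Import Reals List.
Import ListNotations.
Open Scope R_scope.

Definition edist (x c : list R) : R :=
  sqrt (fold_right Rplus 0 (map (fun p => (fst p - snd p) ^ 2) (combine x c))).

Definition disk := (list R * R)%type.

Definition disk_system (d : nat) (M : list disk) : Prop :=
  M <> [] /\ Forall (fun D => length (fst D) = d /\ 0 < snd D) M.

Definition in_all_scaled (M : list disk) (lam : R) (x : list R) : Prop :=
  Forall (fun D => edist x (fst D) <= lam * snd D) M.

Definition cech_scales (d : nat) (M : list disk) (lam : R) : Prop :=
  0 <= lam /\ exists x, length x = d /\ in_all_scaled M lam x.

Definition is_inf (E : R -> Prop) (m : R) : Prop :=
  (forall x, E x -> m <= x) /\ (forall b, (forall x, E x -> b <= x) -> b <= m).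

Definition is_cech_scale (d : nat) (M : list disk) (mu : R) : Prop :=
  is_inf (cech_scales d M) mu.

(* Main.v *)
Require Import Defs.
From Stdlib Require Import Reals List ClassicalEpsilon Classical Lra Lia Arith.
Import ListNotations.
Open Scope R_scope.

Fixpoint sumd (f : nat -> R) (n : nat) : R :=
  match n with O => 0 | S n' => f O + sumd (fun j => f (S j)) n' end.

Lemma sumd_ext n : forall f g, (forall j, (j < n)%nat -> f j = g j) -> sumd f n = sumd g n.
Proof. induction n; intros f g H; simpl; auto.
  rewrite (H 0%nat) by lia. f_equal. apply IHn. intros; apply H; lia. Qed.

Lemma sumd_le n : forall f g, (forall j, (j < n)%nat -> f j <= g j) -> sumd f n <= sumd g n.
Proof. induction n; intros f g H; simpl; [lra|].
  assert (f 0%nat <= g 0%nat) by (apply H; lia).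
  assert (sumd (fun j => f (S j)) n <= sumd (fun j => g (S j)) n) by (apply IHn; intros; apply H; lia).
  lra. Qed.

Lemma sumd_plus n : forall f g, sumd (fun j => f j + g j) n = sumd f n + sumd g n.
Proof. induction n; intros; simpl; [lra|]. rewrite IHn. lra. Qed.

Lemma sumd_scal n : forall k f, sumd (fun j => k * f j) n = k * sumd f n.
Proof. induction n; intros; simpl; [lra|]. rewrite IHn. lra. Qed.

Lemma sumd_nonneg n : forall f, (forall j, 0 <= f j) -> 0 <= sumd f n.
Proof. induction n; intros f H; simpl; [lra|].
  specialize (IHn (fun j => f (S j)) (fun j => H (S j))). specialize (H 0%nat). lra. Qed.

Lemma sumd_term n : forall f j, (forall j, 0 <= f j) -> (j < n)%nat -> f j <= sumd f n.
Proof. induction n; intros f j H Hj; [lia|]. simpl. destruct j.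
  - pose proof (sumd_nonneg n (fun j => f (S j)) (fun j => H (S j))). lra.
  - pose proof (IHn (fun j => f (S j)) j (fun j => H (S j)) ltac:(lia)). specialize (H 0%nat). simpl in *. lra. Qed.

Lemma sumd_cv n : forall (F : nat -> nat -> R) g,
  (forall j, Un_cv (fun k => F k j) (g j)) -> Un_cv (fun k => sumd (F k) n) (sumd g n).
Proof. induction n; intros F g H; simpl.
  - intros e He. exists 0%nat. intros. unfold Rdist. rewrite Rminus_0_r, Rabs_R0. lra.
  - apply CV_plus. apply H. apply (IHn (fun k j => F k (S j)) (fun j => g (S j))). intros; apply H. Qed.

Lemma cv_const c : Un_cv (fun _ => c) c.
Proof. intros e He. exists 0%nat. intros. unfold Rdist. rewrite Rminus_eq_0, Rabs_R0. lra. Qed.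

Lemma cv_inv : Un_cv (fun n => / INR (S n)) 0.
Proof. intros e He. destruct (archimed_cor1 e He) as [N [HN HN0]]. exists N. intros n Hn.
  unfold Rdist. rewrite Rminus_0_r.
  assert (0 < INR N) by (apply lt_0_INR; lia).
  assert (INR N <= INR (S n)) by (apply le_INR; lia).
  rewrite Rabs_pos_eq.
  - apply Rle_lt_trans with (/ INR N); auto. apply Rinv_le_contravar; lra.
  - left. apply Rinv_0_lt_compat. lra. Qed.

Definition SQ d (x c : list R) := sumd (fun j => (nth j x 0 - nth j c 0)^2) d.

Lemma fold_SQ : forall x c d, length x = d -> length c = d ->
  fold_right Rplus 0 (map (fun p => (fst p - snd p) ^ 2) (combine x c)) = SQ d x c.
Proof. unfold SQ. induction x; intros c d Hx Hc; destruct c; simpl in *; subst; try discriminate; simpl; auto.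
  f_equal. apply IHx; auto. Qed.

Lemma SQ_nonneg d x c : 0 <= SQ d x c.
Proof. apply sumd_nonneg. intros; apply pow2_ge_0. Qed.

Lemma sqrt_le_iff s a : 0 <= s -> 0 <= a -> (sqrt s <= a <-> s <= a ^ 2).
Proof. intros Hs Ha; split; intro H.
  - rewrite <- (pow2_sqrt s Hs). apply pow_incr. split; auto. apply sqrt_pos.
  - rewrite <- (sqrt_pow2 a Ha). apply sqrt_le_1_alt; auto. Qed.

Lemma in_SQ d M lam x : disk_system d M -> length x = d -> 0 <= lam ->
  (in_all_scaled M lam x <-> forall D, In D M -> SQ d x (fst D) <= (lam * snd D)^2).
Proof. intros [_ HM] Hx Hl. unfold in_all_scaled. rewrite Forall_forall in *.
  split; intros H D HD; destruct (HM D HD) as [Hc Hr]; specialize (H D HD);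
  unfold edist in *; rewrite fold_SQ with (d := d) in * by auto;
  assert (0 <= lam * snd D) by (apply Rmult_le_pos; lra);
  apply sqrt_le_iff; auto; apply SQ_nonneg. Qed.

Lemma in_mono d M lam lam' x : disk_system d M -> length x = d -> 0 <= lam -> lam <= lam' ->
  in_all_scaled M lam x -> in_all_scaled M lam' x.
Proof. intros HM Hx Hl Hl' H. rewrite in_SQ in * by (eauto; lra).
  intros D HD. specialize (H D HD). destruct HM as [_ HM]. rewrite Forall_forall in HM.
  destruct (HM D HD) as [_ Hr]. apply Rle_trans with (1 := H). apply pow_incr. split.
  apply Rmult_le_pos; lra. apply Rmult_le_compat_r; lra. Qed.

Definition mk (f : nat -> R) d := map f (seq 0 d).
Lemma mk_len f d : length (mk f d) = d.
Proof. unfold mk. rewrite length_map, length_seq. auto. Qed.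
Lemma mk_nth f d j : (j < d)%nat -> nth j (mk f d) 0 = f j.
Proof. intros Hj. unfold mk. rewrite nth_indep with (d' := f 0%nat) by (rewrite length_map, length_seq; auto).
  rewrite map_nth, seq_nth; auto. Qed.

Lemma radius_bound (M : list disk) : exists R, 0 < R /\ forall D, In D M -> snd D <= R.
Proof. induction M as [|a M [R [HR H]]].
  - exists 1. split. lra. intros D []. 
  - exists (Rmax (snd a) R). split. apply Rlt_le_trans with R; auto. apply Rmax_r.
    intros D [<-|HD]. apply Rmax_l. apply Rle_trans with R; auto. apply Rmax_r. Qed.

Lemma eps_bound (M : list disk) e0 : 0 < e0 -> (forall D, In D M -> 0 < snd D) ->
  exists e, 0 < e /\ forall D, In D M -> e <= e0 * snd D.
Proof. intros He0. induction M as [|a M IH]; intros H.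
  - exists 1. split. lra. intros D [].
  - destruct IH as [e [He He']]. intros; apply H; simpl; auto.
    assert (0 < snd a) by (apply H; simpl; auto).
    exists (Rmin (e0 * snd a) e). split. apply Rmin_glb_lt; auto. apply Rmult_lt_0_compat; auto.
    intros D [<-|HD]. apply Rmin_l. apply Rle_trans with e; auto. apply Rmin_r. Qed.

Lemma mid_identity d x y c : length x = d -> length y = d ->
  SQ d (mk (fun j => (nth j x 0 + nth j y 0) / 2) d) c =
  (SQ d x c + SQ d y c) / 2 - SQ d x y / 4.
Proof. intros Hx Hy. unfold SQ.
  rewrite (sumd_ext d _ (fun j => (/2 * (nth j x 0 - nth j c 0)^2 + /2 * (nth j y 0 - nth j c 0)^2) + (-/4) * (nth j x 0 - nth j y 0)^2)).
  - rewrite !sumd_plus, !sumd_scal. lra.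
  - intros j Hj. rewrite mk_nth by auto. field. Qed.

Lemma key d M mu a x y R : disk_system d M -> 0 < R -> (forall D, In D M -> snd D <= R) ->
  0 <= mu -> (forall lam, cech_scales d M lam -> mu <= lam) -> 0 <= a ->
  length x = d -> length y = d -> in_all_scaled M a x -> in_all_scaled M a y ->
  SQ d x y <= 4 * R^2 * (a^2 - mu^2).
Proof. intros HM HR HRb Hmu LB Ha Hx Hy Inx Iny.
  set (z := mk (fun j => (nth j x 0 + nth j y 0) / 2) d).
  assert (Hz : length z = d) by apply mk_len.
  set (s := SQ d x y). assert (Hs : 0 <= s) by apply SQ_nonneg.
  rewrite in_SQ in Inx, Iny by eauto.
  assert (Hb : forall D, In D M -> SQ d z (fst D) <= (a * snd D)^2 - s / 4).
  { intros D HD. unfold z. rewrite mid_identity by auto. specialize (Inx D HD). specialize (Iny D HD). unfold s. lra. }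
  pose proof HM as [Hne HMf]. rewrite Forall_forall in HMf.
  set (u := s / (4 * R^2)). assert (Hsu : s = 4 * R^2 * u) by (unfold u; field; lra).
  assert (Hu0 : u <= a^2).
  { destruct M as [|D0 M']; [congruence|].
    assert (HD0 : In D0 (D0 :: M')) by (simpl; auto).
    pose proof (Hb D0 HD0). pose proof (SQ_nonneg d z (fst D0)).
    pose proof (HRb D0 HD0). destruct (HMf D0 HD0) as [_ Hr0].
    assert (s/4 <= (a * snd D0)^2) by lra.
    assert ((a * snd D0)^2 <= (a * R)^2) by (apply pow_incr; split; [apply Rmult_le_pos; lra| apply Rmult_le_compat_l; lra]).
    assert (R^2 * u <= R^2 * a^2) by (match goal with H : s/4 <= _ |- _ => rewrite Hsu in H end; nra).
    apply Rmult_le_reg_l with (R^2); auto. apply pow_lt; auto. }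
  set (t := a^2 - u). assert (Ht : 0 <= t) by (unfold t; lra).
  assert (Hc : cech_scales d M (sqrt t)).
  { split. apply sqrt_pos. exists z. split; auto. rewrite in_SQ; [| exact HM | exact Hz | apply sqrt_pos].
    intros D HD. rewrite Rpow_mult_distr, pow2_sqrt by auto.
    pose proof (Hb D HD). pose proof (HRb D HD). destruct (HMf D HD) as [_ Hr].
    assert (snd D ^2 <= R^2) by (apply pow_incr; lra).
    assert (0 <= u) by (unfold u; apply Rmult_le_pos; [lra| left; apply Rinv_0_lt_compat; apply Rmult_lt_0_compat; [lra| apply pow_lt; lra]]).
    assert (u * snd D ^ 2 <= u * R^2) by (apply Rmult_le_compat_l; lra).
    unfold t. rewrite Hsu in H. rewrite Rpow_mult_distr in H. nra. }
  pose proof (LB _ Hc). assert (mu^2 <= t).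
  { rewrite <- (pow2_sqrt t Ht). apply pow_incr; lra. }
  unfold t in H0. rewrite Hsu. nra. Qed.

Lemma SQ_zero_eq d x y : length x = d -> length y = d -> SQ d x y <= 0 -> x = y.
Proof. intros Hx Hy H. apply nth_ext with (d := 0) (d' := 0). congruence.
  intros j Hj. rewrite Hx in Hj.
  pose proof (sumd_term d (fun j => (nth j x 0 - nth j y 0)^2) j (fun j => pow2_ge_0 _) Hj).
  unfold SQ in H. cbv beta in H0. assert ((nth j x 0 - nth j y 0)^2 = 0) by (pose proof (pow2_ge_0 (nth j x 0 - nth j y 0)); lra).
  apply Rminus_diag_uniq. destruct (Req_dec (nth j x 0 - nth j y 0) 0) as [E|E]; auto; exfalso; exact (pow_nonzero _ 2 E H1). Qed.

Lemma forward d M mu : disk_system d M -> 0 <= mu -> is_cech_scale d M mu ->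
  exists x, length x = d /\ in_all_scaled M mu x /\
     forall y, length y = d -> in_all_scaled M mu y -> y = x.
Proof. intros HM Hmu [LB GLB].
  destruct (radius_bound M) as [R [HR HRb]].
  set (a := fun n => mu + / INR (S n)).
  assert (Ha0 : forall n, 0 < / INR (S n)) by (intros; apply Rinv_0_lt_compat, lt_0_INR; lia).
  assert (Hex : forall n, exists x, length x = d /\ in_all_scaled M (a n) x).
  { intros n. apply NNPP. intros Hn. specialize (Ha0 n).
    assert (a n <= mu).
    { apply GLB. intros lam [Hl [y [Hy Hin]]]. apply Rnot_lt_le. intros Hlt.
      apply Hn. exists y. split; auto. apply in_mono with d lam; auto; lra. }
    unfold a in H. lra. }
  set (xs := fun n => proj1_sig (constructive_indefinite_description _ (Hex n))).
  assert (Hxs : forall n, length (xs n) = d /\ in_all_scaled M (a n) (xs n))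
    by (intros; unfold xs; apply proj2_sig).
  assert (Hxs' : forall N n, (N <= n)%nat -> in_all_scaled M (a N) (xs n)).
  { intros N n HNn. destruct (Hxs n) as [Hl Hi]. apply in_mono with d (a n); auto.
    unfold a; specialize (Ha0 n); lra. unfold a. apply Rplus_le_compat_l.
    apply Rinv_le_contravar. apply lt_0_INR; lia. apply le_INR; lia. }
  assert (Hcl : forall N n m, (N <= n)%nat -> (N <= m)%nat ->
     SQ d (xs n) (xs m) <= 4 * R^2 * (a N ^2 - mu^2)).
  { intros N n m Hn Hm. apply key with M; auto.
    unfold a; specialize (Ha0 N); lra. apply Hxs. apply Hxs. }
  assert (Hcauchy : forall j, (j < d)%nat -> Cauchy_crit (fun n => nth j (xs n) 0)).
  { intros j Hj e He. set (K := 4 * R^2 * (2 * mu + 1)).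
    assert (HK : 0 <= K) by (unfold K; pose proof (pow2_ge_0 R); nra).
    assert (He2 : 0 < e^2 / (K + 1)) by (apply Rdiv_lt_0_compat; [apply pow_lt|]; lra).
    destruct (archimed_cor1 _ He2) as [N [HN HN0]]. exists N. intros n m Hn Hm.
    pose proof (Hcl N n m Hn Hm).
    pose proof (sumd_term d (fun j => (nth j (xs n) 0 - nth j (xs m) 0)^2) j (fun j => pow2_ge_0 _) Hj).
    unfold SQ in H. cbv beta in H0.
    set (h := / INR (S N)) in *.
    assert (Hh : h < e^2 / (K+1)).
    { apply Rle_lt_trans with (/ INR N); auto. unfold h. apply Rinv_le_contravar.
      apply lt_0_INR; lia. apply le_INR; lia. }
    assert (Hh1 : h <= 1).
    { unfold h. rewrite <- Rinv_1. apply Rinv_le_contravar. lra. rewrite S_INR. pose proof (pos_INR N). lra. }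
    assert (Hh0 : 0 < h) by apply Ha0.
    assert (a N ^ 2 - mu ^ 2 <= (2 * mu + 1) * h) by (unfold a; fold h; nra).
    assert (4 * R^2 * (a N ^ 2 - mu ^ 2) <= K * h) by (unfold K; pose proof (pow2_ge_0 R); nra).
    assert (K * h < e^2).
    { apply Rle_lt_trans with ((K+1) * h). nra.
      apply Rmult_lt_reg_r with (/ (K+1)). apply Rinv_0_lt_compat; lra.
      replace ((K+1) * h * / (K+1)) with h by (field; lra). exact Hh. }
    unfold Rdist. set (v := nth j (xs n) 0 - nth j (xs m) 0) in *.
    apply Rnot_le_lt. intros Hv. pose proof (pow2_abs v).
    assert (e^2 <= Rabs v ^2) by (apply pow_incr; lra). lra. }
  set (l := fun j => match lt_dec j d with
                     | left Hj => proj1_sig (R_complete _ (Hcauchy j Hj))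
                     | right _ => 0 end).
  assert (Hl : forall j, (j < d)%nat -> Un_cv (fun n => nth j (xs n) 0) (l j)).
  { intros j Hj. unfold l. destruct (lt_dec j d); [|lia]. apply proj2_sig. }
  assert (Hl' : forall j, Un_cv (fun n => nth j (xs n) 0) (l j)).
  { intros j. destruct (lt_dec j d) as [Hj|Hj]. auto.
    unfold l. destruct (lt_dec j d); [lia|].
    intros e He. exists 0%nat. intros k _. rewrite nth_overflow.
    unfold Rdist. rewrite Rminus_0_r, Rabs_R0. lra. destruct (Hxs k) as [-> _]. lia. }
  set (L := mk l d).
  assert (HLl : length L = d) by apply mk_len.
  assert (HLin : in_all_scaled M mu L).
  { rewrite (in_SQ d) by auto. intros D HD.
    pose proof HM as [_ HMf]. rewrite Forall_forall in HMf. destruct (HMf D HD) as [Hc Hr].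
    assert (Hcv1 : Un_cv (fun n => SQ d (xs n) (fst D)) (SQ d L (fst D))).
    { unfold SQ. rewrite (sumd_ext d (fun j => (nth j L 0 - nth j (fst D) 0)^2)
         (fun j => (l j - nth j (fst D) 0)^2)).
      2:{ intros j Hj. unfold L. rewrite mk_nth by auto. auto. }
      apply (sumd_cv d (fun n j => (nth j (xs n) 0 - nth j (fst D) 0)^2)).
      intros j. simpl. apply CV_mult. apply CV_minus; auto. apply cv_const.
      apply CV_mult. apply CV_minus; auto. apply cv_const. apply cv_const. }
    assert (Hcv2 : Un_cv (fun n => (a n * snd D)^2) ((mu * snd D)^2)).
    { simpl. unfold a.
      assert (Hc3 : Un_cv (fun n => (mu + / INR (S n)) * snd D) (mu * snd D)).
      { pose proof (CV_plus _ _ _ _ (cv_const mu) cv_inv) as Hp. rewrite Rplus_0_r in Hp.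
        apply CV_mult. exact Hp. apply cv_const. }
      apply CV_mult. auto. apply CV_mult. auto. apply cv_const. }
    refine (Rle_cv_lim _ Hcv1 Hcv2). intros n. destruct (Hxs n) as [Hn Hi].
    rewrite (in_SQ d) in Hi by (auto; unfold a; specialize (Ha0 n); lra). auto. }
  exists L. split; auto. split; auto.
  intros y Hy Hiny. apply SQ_zero_eq with d; auto.
  pose proof (key d M mu mu y L R HM HR HRb Hmu LB Hmu Hy HLl Hiny HLin). lra.
Qed.

Lemma backward d M mu : (1 <= d)%nat -> disk_system d M -> 0 <= mu ->
  (exists x, length x = d /\ in_all_scaled M mu x /\
     forall y, length y = d -> in_all_scaled M mu y -> y = x) -> is_cech_scale d M mu.
Proof. intros Hd HM Hmu [x [Hx [Hin Hu]]]. split.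
  - intros lam [Hl [y [Hy Hiny]]]. apply Rnot_lt_le. intros Hlt.
    pose proof HM as [_ HMf]. rewrite Forall_forall in HMf.
    destruct (eps_bound M (mu - lam)) as [e [He HeD]]. lra. intros D HD; apply HMf; auto.
    destruct d as [|d']; [lia|].
    set (y' := mk (fun j => match j with O => nth 0 y 0 + e | S _ => nth j y 0 end) (S d')).
    assert (Hy' : length y' = S d') by apply mk_len.
    assert (Hiny' : in_all_scaled M mu y').
    { rewrite (in_SQ (S d')) by auto. rewrite (in_SQ (S d')) in Hiny by auto.
      intros D HD. specialize (Hiny D HD). specialize (HeD D HD). destruct (HMf D HD) as [Hc Hr].
      unfold SQ in *. cbn [sumd] in *.
      rewrite (sumd_ext d' (fun j => (nth (S j) y' 0 - nth (S j) (fst D) 0)^2)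
                        (fun j => (nth (S j) y 0 - nth (S j) (fst D) 0)^2)).
      2:{ intros j Hj. unfold y'. rewrite mk_nth by lia. auto. }
      unfold y' at 1. rewrite mk_nth by lia.
      set (B := sumd (fun j => (nth (S j) y 0 - nth (S j) (fst D) 0)^2) d') in *.
      assert (HB : 0 <= B) by (apply sumd_nonneg; intros; apply pow2_ge_0).
      set (w := nth 0 y 0 - nth 0 (fst D) 0) in *.
      set (r := snd D) in *.
      assert (Hlr : 0 <= lam * r) by (apply Rmult_le_pos; lra).
      assert (Hw : w <= lam * r) by nra.
      assert (H1 : (nth 0 y 0 + e - nth 0 (fst D) 0) = w + e) by (unfold w; ring).
      rewrite H1.
      assert (H2 : lam * r + e <= mu * r) by nra.
      assert ((lam * r + e)^2 <= (mu * r)^2) by (apply pow_incr; lra).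
      nra. }
    assert (Hiny2 : in_all_scaled M mu y) by (apply in_mono with (S d') lam; auto; lra).
    pose proof (Hu y Hy Hiny2). pose proof (Hu y' Hy' Hiny').
    assert (E : nth 0 y' 0 = nth 0 y 0 + e) by (unfold y'; apply mk_nth; lia).
    rewrite H0, <- H in E. lra.
  - intros b Hb. apply Hb. split; auto. exists x. auto.
Qed.

Theorem lemma2p1 (d : nat) (M : list disk) (mu : R) :
  (1 <= d)%nat -> disk_system d M -> 0 <= mu ->
  (is_cech_scale d M mu <->
   exists x, length x = d /\ in_all_scaled M mu x /\
     forall y, length y = d -> in_all_scaled M mu y -> y = x).
Proof.
  intros Hd HM Hmu. split.
  - apply forward; auto.
  - apply backward; auto.
Qed.
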